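(* Let $(E,\|\cdot\|)$ be a real Banach space and $\mathcal{C}\subset E$ a closed convex cone with $\mathbb{R}_+\mathcal{C}=\mathcal{C}$ and $\mathcal{C}\cap(-\mathcal{C})=\{0\}$. Assume: (H1) there are $\ell\in E'$ with $\|\ell\|=1$ and $K\in[1,\infty)$ with $\langle\ell,\phi\rangle\ge\frac1K\|\phi\|$ for all $\phi\in\mathcal{C}$; (H2) $\rho\in(0,1]$ is fixed such that $\mathcal{C}(\rho)=\{\phi\in\mathcal{C}:B(\phi,\rho\|\phi\|)\subset\mathcal{C}\}$ contains a nonzero element. Set $\mathcal{C}_{\ell=1}(\rho)=\{\phi\in\mathcal{C}(\rho):\langle\ell,\phi\rangle=1\}$. Let $\mathcal{M}\subset L(E)$ be a collection of operators such that, for some $1\le\vartheta<\infty$ and every $L\in\mathcal{M}$: (H3) $L(\mathcal{C}\setminus\{0\})\subset\mathcal{C}(\rho)\setminus\{0\}$, and (H4) $\frac1\vartheta\le\|L\|\le\vartheta$. Let $(\Omega,\mathcal{F},\mathbb{P})$ be a probability space with an invertible, measure-preserving, ergodic map $\tau$. Let $X=L^\infty(\Omega,E)$ be the Banach space of uniformly bounded Bochner measurable maps $\boldsymbol{\phi}=(\phi_\omega)_{\omega\in\Omega}:\Omega\to E$ with norm $\sup_\omega\|\phi_\omega\|$. Let $(\mathcal{L}_\omega)_{\omega\in\Omega}$ be a family with values in $\mathcal{M}$ such that $\mathbf{L}:X\to X$, $(\mathbf{L}\boldsymbol{\phi})_\omega=\mathcal{L}_{\tau^{-1}\omega}\phi_{\tau^{-1}\omega}$,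 is well defined (i.e. preserves Bochner measurability of sections). For $\boldsymbol{\phi}\in X$ with $\phi_\omega\in\mathcal{C}\setminus\{0\}$ for all $\omega$, define \[(\boldsymbol{\pi}(\boldsymbol{\phi}))_\omega=\frac{\mathcal{L}_{\tau^{-1}\omega}\phi_{\tau^{-1}\omega}}{\langle\ell,\mathcal{L}_{\tau^{-1}\omega}\phi_{\tau^{-1}\omega}\rangle}.\] Then $\boldsymbol{\pi}$ admits a unique fixed point section $\mathbf{f}=\boldsymbol{\pi}(\mathbf{f})\in X$ with $f_\omega\in\mathcal{C}_{\ell=1}(\rho)$ for all $\omega\in\Omega$.
   Context: A map $\Omega\to E$ is Bochner measurable if it is a uniform limit of $\mathcal{F}$-measurable maps with countable image. *)

(* Defs.v *)
From HB Require Import structures.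
From mathcomp Require Import all_boot all_order all_algebra.
From mathcomp Require Import all_classical all_reals all_analysis.
Set Implicit Arguments. Unset Strict Implicit. Unset Printing Implicit Defensive.
Import Order.TTheory GRing.Theory Num.Theory.
Import numFieldNormedType.Exports.
Local Open Scope classical_set_scope.
Local Open Scope ring_scope.

Definition opnorm {R : realType} {E F : normedModType R} (f : E -> F) : R :=
  sup [set `|f x| | x in [set x : E | `|x| <= 1]].

Definition convex_subset {R : realType} {E : lmodType R} (C : set E) :=
  forall x y (t : R), C x -> C y -> 0 <= t -> t <= 1 -> C (t *: x + (1 - t) *: y).

Definition proper_closed_cone {R : realType} {E : normedModType R} (C : set E) :=
  [/\ closed C, convex_subset C,
      (forall (t : R) x, 0 <= t -> C x -> C (t *: x)),
      C 0 & (forall x, C x -> C (- x) -> x = 0)].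

Definition cone_rho {R : realType} {E : normedModType R} (C : set E) (rho : R) : set E :=
  [set phi | C phi /\ ball phi (rho * `|phi|) `<=` C].

Definition cone_rho_l1 {R : realType} {E : normedModType R} (C : set E) (rho : R)
  (l : E -> R) : set E :=
  [set phi | cone_rho C rho phi /\ l phi = 1].

(* F-measurable maps Omega -> E with countable image (fibres measurable;
   for countably-valued maps into a metric space this is Borel measurability). *)
Definition countably_valued_measurable {d} {Omega : measurableType d} {E : Type}
  (g : Omega -> E) :=
  countable (range g) /\ forall x : E, measurable (g @^-1` [set x]).

Definition bochner_measurable {d} {Omega : measurableType d} {R : realType}
  {E : normedModType R} (f : Omega -> E) :=
  exists g : nat -> Omega -> E,
    (forall n, countably_valued_measurable (g n)) /\
    (forall e : R, 0 < e -> exists N : nat, forall n, (N <= n)%N ->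
        forall w, `|g n w - f w| <= e).

Definition Linfty_section {d} {Omega : measurableType d} {R : realType}
  {E : normedModType R} (f : Omega -> E) :=
  bochner_measurable f /\ exists M : R, forall w, `|f w| <= M.

Definition invertible_mp {d} {Omega : measurableType d} {R : realType}
  (P : probability Omega R) (tau taui : Omega -> Omega) :=
  [/\ cancel tau taui, cancel taui tau,
      measurable_fun setT tau, measurable_fun setT taui &
      forall A, measurable A -> P (tau @^-1` A) = P A].

Definition ergodic {d} {Omega : measurableType d} {R : realType}
  (P : probability Omega R) (tau : Omega -> Omega) :=
  forall A, measurable A -> tau @^-1` A = A -> P A = 0%E \/ P A = 1%E.

(* Main.v *)
Require Import Defs.
From HB Require Import structures.
From mathcomp Require Import all_boot all_order all_algebra.
From mathcomp Require Import all_classical all_reals all_analysis.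
From mathcomp Require Import ring lra.
Import Order.TTheory GRing.Theory Num.Theory.
Import numFieldNormedType.Exports.
Local Open Scope classical_set_scope.
Local Open Scope ring_scope.
Set Implicit Arguments. Unset Strict Implicit.


Lemma opnorm_has_sup (R : realType) (E F : normedModType R) (f : E -> F) :
  opnorm f != 0 -> has_sup [set `|f x| | x in [set x : E | `|x| <= 1]].
Proof.
move=> H; apply: contrapT => /sup_out hs; move: H; by rewrite /opnorm hs eqxx.
Qed.

Lemma l_le (R : realType) (E : normedModType R) (l : {scalar E}) :
  opnorm l = 1 -> forall x, `|l x| <= `|x|.
Proof.
move=> H x.
have hs : has_sup [set `|l x| | x in [set x : E | `|x| <= 1]].
  by apply: opnorm_has_sup; rewrite H oner_neq0.
have [->|x0] := eqVneq x 0; first by rewrite linear0 !normr0.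
have nx : 0 < `|x| by rewrite normr_gt0.
have : `|l (`|x|^-1 *: x)| <= 1.
  rewrite -H; apply: sup_upper_bound => //; exists (`|x|^-1 *: x) => //=.
  by rewrite normrZ normfV normr_id mulVf // gt_eqF.
rewrite linearZ /= normrM normfV normr_id ler_pdivrMl // mulr1 //.
Qed.

Lemma opnorm_gt (R : realType) (E F : normedModType R) (f : E -> F) (a : R) :
  0 < a -> a <= opnorm f -> exists x, `|x| <= 1 /\ a / 2 < `|f x|.
Proof.
move=> a0 ha.
have hs : has_sup [set `|f x| | x in [set x : E | `|x| <= 1]].
  apply: opnorm_has_sup; by rewrite gt_eqF // (lt_le_trans a0).
have a2 : 0 < a / 2 by lra.
have [e [x /= x1 <-] He] := sup_adherent a2 hs.
exists x; split => //.
apply: le_lt_trans He; move: ha; rewrite /opnorm; lra.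
Qed.


Lemma cone_scale (R : realType) (E : normedModType R) (C : set E) t x :
  proper_closed_cone C -> 0 <= t -> C x -> C (t *: x).
Proof. by case=> _ _ H _ _; apply: H. Qed.

Lemma cone_add (R : realType) (E : normedModType R) (C : set E) x y :
  proper_closed_cone C -> C x -> C y -> C (x + y).
Proof.
move=> hC Cx Cy; case: (hC) => _ cv _ _ _.
have h := cv x y (1/2) Cx Cy ltac:(lra) ltac:(lra).
have -> : x + y = 2 *: ((1/2) *: x + (1 - 1/2) *: y).
  have e1 : 2 * (1/2) = 1 :> R by lra.
  have e2 : 2 * (1 - 1/2) = 1 :> R by lra.
  by rewrite scalerDr !scalerA e1 e2 !scale1r.
exact: cone_scale.
Qed.

Lemma ballE (R : realType) (E : normedModType R) (x y : E) r :
  ball x r y <-> `|x - y| < r.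
Proof. by rewrite -ball_normE. Qed.

Lemma cone_rho_scale (R : realType) (E : normedModType R) (C : set E) rho t x :
  proper_closed_cone C -> 0 < t -> cone_rho C rho x -> cone_rho C rho (t *: x).
Proof.
move=> hC t0 [Cx Bx]; split; first by apply: cone_scale => //; exact: ltW.
move=> z /ballE hz.
have -> : z = t *: (t^-1 *: z) by rewrite scalerA mulfV ?gt_eqF // scale1r.
apply: cone_scale => //; first exact: ltW.
apply: Bx; apply/ballE.
have -> : x - t^-1 *: z = t^-1 *: (t *: x - z).
  by rewrite scalerBr scalerA mulVf ?gt_eqF // scale1r.
rewrite normrZ normfV gtr0_norm // -ltr_pdivlMl ?invr_gt0 // invrK.
by move: hz; rewrite normrZ gtr0_norm // mulrCA.
Qed.


Lemma normK (R : realType) (E : normedModType R) (C : set E) (l : {scalar E}) K phi :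
  0 < K -> (forall phi, C phi -> l phi >= K^-1 * `|phi|) -> C phi ->
  `|phi| <= K * l phi.
Proof.
by move=> K0 H1 /H1; rewrite -ler_pdivrMl.
Qed.

Lemma lpos (R : realType) (E : normedModType R) (C : set E) (l : {scalar E}) K phi :
  0 < K -> (forall phi, C phi -> l phi >= K^-1 * `|phi|) -> C phi -> phi != 0 ->
  0 < l phi.
Proof.
move=> K0 H1 /H1 h p0; apply: lt_le_trans h.
by rewrite mulr_gt0 ?invr_gt0 // normr_gt0.
Qed.

Lemma lower (R : realType) (E : normedModType R) (C : set E) (l : {scalar E}) K rho X Y :
  proper_closed_cone C -> 0 < rho -> 
  0 < K -> (forall phi, C phi -> l phi >= K^-1 * `|phi|) -> opnorm l = 1 ->
  C X -> X != 0 -> cone_rho C rho Y -> Y != 0 ->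
  C (Y - (rho / (2 * K) * l Y / l X) *: X).
Proof.
move=> hC r0 K0 H1 hl CX X0 [CY BY] Y0.
have lX := lpos K0 H1 CX X0.
have lY := lpos K0 H1 CY Y0.
apply: BY; rewrite -ball_normE /ball_ /=.
rewrite opprB addrC subrK normrZ.
have nX := normK K0 H1 CX.
have nY : l Y <= `|Y| by apply: le_trans (l_le hl Y); exact: ler_norm.
have Yp : 0 < `|Y| by rewrite normr_gt0.
rewrite ger0_norm; last by apply: divr_ge0; [apply: mulr_ge0; [apply: divr_ge0; lra|lra]|lra].
apply: (le_lt_trans (y := rho / (2 * K) * l Y / l X * (K * l X))).
  by apply: ler_wpM2l => //; apply: divr_ge0; [apply: mulr_ge0; [apply: divr_ge0; lra|lra]|lra].
have -> : rho / (2 * K) * l Y / l X * (K * l X) = rho / 2 * l Y.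
  by field; rewrite !gt_eqF.
nra.
Qed.


Definition cmb (R : ringType) (V : lmodType R) (U W : V) (p q : R) := p *: U + q *: W.

Lemma cmbD (R : comRingType) (V : lmodType R) (U W : V) p q p' q' :
  cmb U W p q + cmb U W p' q' = cmb U W (p + p') (q + q').
Proof. by rewrite /cmb !scalerDl addrACA. Qed.

Lemma cmbN (R : comRingType) (V : lmodType R) (U W : V) p q :
  - cmb U W p q = cmb U W (- p) (- q).
Proof. by rewrite /cmb opprD -!scaleNr. Qed.

Lemma cmbZ (R : comRingType) (V : lmodType R) (U W : V) k p q :
  k *: cmb U W p q = cmb U W (k * p) (k * q).
Proof. by rewrite /cmb scalerDr !scalerA. Qed.

Lemma cmbB (R : comRingType) (V : lmodType R) (U W : V) p q p' q' :
  cmb U W p q - cmb U W p' q' = cmb U W (p - p') (q - q').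
Proof. by rewrite cmbN cmbD. Qed.

Lemma cmb_WU (R : comRingType) (V : lmodType R) (U W : V) a :
  W - a *: U = cmb U W (- a) 1.
Proof. by rewrite /cmb scale1r addrC scaleNr. Qed.

Lemma cmb_UW (R : comRingType) (V : lmodType R) (U W : V) a :
  a *: U - W = cmb U W a (-1).
Proof. by rewrite /cmb scaleN1r. Qed.

Definition good (R : realType) (E : normedModType R) (C : set E) (u v : E) (e : R) :=
  exists a b : R, [/\ 0 < a, a <= b, C (v - a *: u), C (b *: u - v) & 1 - a / b <= e].

Lemma good_ge0 (R : realType) (E : normedModType R) (C : set E) u v e :
  good C u v e -> 0 <= e.
Proof.
move=> [a [b [a0 ab _ _ he]]]; apply: le_trans he.
rewrite subr_ge0 ler_pdivrMr ?mul1r //; exact: lt_le_trans ab.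
Qed.

Lemma good_mono (R : realType) (E : normedModType R) (C : set E) u v e e' :
  e <= e' -> good C u v e -> good C u v e'.
Proof.
move=> ee [a [b [a0 ab h1 h2 he]]]; exists a, b; split => //; exact: le_trans ee.
Qed.

Lemma good_scale (R : realType) (E : normedModType R) (C : set E) u v e p q :
  proper_closed_cone C -> 0 < p -> 0 < q -> good C u v e -> good C (p *: u) (q *: v) e.
Proof.
move=> hC p0 q0 [a [b [a0 ab h1 h2 he]]].
exists (q * a / p), (q * b / p); split.
- by apply: divr_gt0 => //; apply: mulr_gt0.
- by rewrite ler_pM2r ?invr_gt0 // ler_pM2l.
- have -> : q *: v - (q * a / p) *: (p *: u) = q *: (v - a *: u).
    rewrite scalerBr !scalerA; congr (_ - _ *: _).
    by field; rewrite gt_eqF.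
  by apply: cone_scale => //; exact: ltW.
- have -> : (q * b / p) *: (p *: u) - q *: v = q *: (b *: u - v).
    rewrite scalerBr !scalerA; congr (_ *: _ - _).
    by field; rewrite gt_eqF.
  by apply: cone_scale => //; exact: ltW.
- have -> : q * a / p / (q * b / p) = a / b.
    by field; rewrite !gt_eqF //; apply: lt_le_trans ab.
  done.
Qed.


Lemma good_step (R : realType) (E : normedModType R) (C : set E) (l : {scalar E})
  K rho (L : {linear E -> E}) u v e :
  proper_closed_cone C -> 0 < rho -> rho <= 1 -> 1 <= K ->
  (forall phi, C phi -> l phi >= K^-1 * `|phi|) -> opnorm l = 1 ->
  (forall phi, C phi -> phi != 0 -> cone_rho C rho (L phi) /\ L phi != 0) ->
  good C u v e -> good C (L u) (L v) ((1 - (rho / (2 * K)) ^+ 2) * e).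
Proof.
move=> hC r0 r1 K1 H1 hl H3 hg.
have e0 := good_ge0 hg.
move: hg => [a [b [a0 ab Cx Cy he]]].
have K0 : 0 < K by lra.
set c := rho / (2 * K).
have c0 : 0 < c by rewrite /c divr_gt0 // mulr_gt0.
have c1 : c <= 1 / 2.
  rewrite /c ler_pdivrMr ?mulr_gt0 //; nra.
have lam0 : 0 <= (1 - c ^+ 2) * e by apply: mulr_ge0 => //; nra.
have C0 : C 0 by case: hC.
have [x0|xn0] := eqVneq (v - a *: u) 0.
  have hv : v = a *: u by apply/eqP; rewrite -subr_eq0 x0.
  exists a, a; split => //.
  - by rewrite hv linearZ subrr.
  - by rewrite hv linearZ subrr.
  - by rewrite divff ?gt_eqF // subrr.
have [y0|yn0] := eqVneq (b *: u - v) 0.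
  have hv : v = b *: u by apply/eqP; rewrite eq_sym -subr_eq0 y0.
  have b0 : 0 < b by apply: lt_le_trans ab.
  exists b, b; split => //.
  - by rewrite hv linearZ subrr.
  - by rewrite hv linearZ subrr.
  - by rewrite divff ?gt_eqF // subrr.
have [RX X0] := H3 _ Cx xn0.
have [RY Y0] := H3 _ Cy yn0.
set X := L (v - a *: u) in RX X0 *.
set Y := L (b *: u - v) in RY Y0 *.
have CX : C X by case: RX.
have CY : C Y by case: RY.
have lX := lpos K0 H1 CX X0.
have lY := lpos K0 H1 CY Y0.
have h1 := lower hC r0 K0 H1 hl CX X0 RY Y0.
have h2 := lower hC r0 K0 H1 hl CY Y0 RX X0.
rewrite -/c in h1 h2.
set s := c * l Y / l X in h1.
set s2 := c * l X / l Y in h2.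
have s0 : 0 < s by rewrite /s divr_gt0 // mulr_gt0.
have s20 : 0 < s2 by rewrite /s2 divr_gt0 // mulr_gt0.
have ss : s * s2 = c ^+ 2.
  by rewrite /s /s2; move: (l X) (l Y) lX lY => p q p0 q0; field; rewrite !gt_eqF.
have eX : X = cmb (L u) (L v) (- a) 1 by rewrite /X linearB linearZ /= cmb_WU.
have eY : Y = cmb (L u) (L v) b (-1) by rewrite /Y linearB linearZ /= cmb_UW.
exists ((b * s2 + a) / (1 + s2)), ((b + a * s) / (1 + s)); split.
- by apply: divr_gt0; nra.
- have h : 0 <= (b - a) * (1 - s * s2) by apply: mulr_ge0; [lra | rewrite ss; nra].
  rewrite ler_pdivrMr; last lra.
  rewrite mulrAC ler_pdivlMr; last lra.
  nra.
- have -> : L v - ((b * s2 + a) / (1 + s2)) *: L u = (1 + s2)^-1 *: (X - s2 *: Y).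
    rewrite eX eY cmbZ cmbB cmbZ cmb_WU; congr cmb; field; lra.
  apply: cone_scale => //; rewrite invr_ge0; lra.
- have -> : ((b + a * s) / (1 + s)) *: L u - L v = (1 + s)^-1 *: (Y - s *: X).
    rewrite eX eY cmbZ cmbB cmbZ cmb_UW; congr cmb; field; lra.
  apply: cone_scale => //; rewrite invr_ge0; lra.
- have b0 : 0 < b by apply: lt_le_trans ab.
  have -> : 1 - (b * s2 + a) / (1 + s2) / ((b + a * s) / (1 + s)) =
            (1 - c ^+ 2) * (b - a) / ((1 + s2) * (b + a * s)).
    rewrite -ss; field; apply/andP; split; rewrite gt_eqF //; nra.
  apply: (le_trans (y := (1 - c ^+ 2) * (1 - a / b))); last first.
    by apply: ler_wpM2l => //; nra.
  have -> : 1 - a / b = (b - a) / b by field; rewrite gt_eqF.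
  rewrite -mulrA; apply: ler_wpM2l; first nra.
  apply: ler_wpM2l; first lra.
  rewrite lef_pV2 ?posrE; nra.
Qed.


Lemma good_init (R : realType) (E : normedModType R) (C : set E) (l : {scalar E})
  K rho X Y :
  proper_closed_cone C -> 0 < rho -> rho <= 1 -> 1 <= K ->
  (forall phi, C phi -> l phi >= K^-1 * `|phi|) -> opnorm l = 1 ->
  cone_rho C rho X -> X != 0 -> cone_rho C rho Y -> Y != 0 -> good C X Y 1.
Proof.
move=> hC r0 r1 K1 H1 hl RX X0 RY Y0.
have K0 : 0 < K by lra.
have CX : C X by case: RX.
have CY : C Y by case: RY.
have lX := lpos K0 H1 CX X0.
have lY := lpos K0 H1 CY Y0.
have h1 := lower hC r0 K0 H1 hl CX X0 RY Y0.
have h2 := lower hC r0 K0 H1 hl CY Y0 RX X0.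
set c := rho / (2 * K) in h1 h2.
have c0 : 0 < c by rewrite /c divr_gt0 // mulr_gt0.
have c1 : c <= 1 / 2.
  rewrite /c ler_pdivrMr ?mulr_gt0 //; nra.
set s := c * l Y / l X in h1.
set s2 := c * l X / l Y in h2.
have s0 : 0 < s by rewrite /s divr_gt0 // mulr_gt0.
have s20 : 0 < s2 by rewrite /s2 divr_gt0 // mulr_gt0.
have ss : s * s2 = c ^+ 2.
  by rewrite /s /s2; move: (l X) (l Y) lX lY => p q p0 q0; field; rewrite !gt_eqF.
exists s, s2^-1; split => //.
- rewrite -(ler_pM2r s20) mulVf ?gt_eqF // ss; nra.
- have -> : s2^-1 *: X - Y = s2^-1 *: (X - s2 *: Y).
    by rewrite scalerBr scalerA mulVf ?gt_eqF // scale1r.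
  apply: cone_scale => //; rewrite invr_ge0; lra.
- rewrite invrK ss; nra.
Qed.

Lemma good_norm (R : realType) (E : normedModType R) (C : set E) (l : {scalar E})
  K u v e :
  proper_closed_cone C -> 0 < K ->
  (forall phi, C phi -> l phi >= K^-1 * `|phi|) ->
  good C u v e -> C u -> l u = 1 -> l v = 1 -> `|u - v| <= 2 * K * e.
Proof.
move=> hC K0 H1 [a [b [a0 ab Cx Cy he]]] Cu lu lv.
have n1 := normK K0 H1 Cx.
have n2 := normK K0 H1 Cy.
have nu := normK K0 H1 Cu.
have la : l (a *: u) = a * l u := linearZ_LR l a u.
have lb : l (b *: u) = b * l u := linearZ_LR l b u.
have e1 : l (v - a *: u) = 1 - a.
  by rewrite (raddfB l); change (l v - l (a *: u) = 1 - a); rewrite la lu lv mulr1.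
have e2 : l (b *: u - v) = b - 1.
  by rewrite (raddfB l); change (l (b *: u) - l v = b - 1); rewrite lb lu lv mulr1.
rewrite e1 in n1; rewrite e2 in n2.
have ha : 0 <= 1 - a by move: n1 => /(le_trans (normr_ge0 _)); rewrite pmulr_rge0.
have hb : 0 <= b - 1 by move: n2 => /(le_trans (normr_ge0 _)); rewrite pmulr_rge0.
have b0 : 0 < b by lra.
have hab : 1 - a <= 1 - a / b.
  rewrite lerD2l lerN2 ler_pdivrMr // ler_peMr //; lra.
have -> : u - v = (1 - a) *: u - (v - a *: u).
  by rewrite scalerBl scale1r opprB addrA subrK.
apply: le_trans (ler_normB _ _) _.
rewrite normrZ ger0_norm //.
rewrite lu mulr1 in nu.
have : (1 - a) * `|u| <= (1 - a) * K by apply: ler_wpM2l.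
have : 1 - a <= e by lra.
nra.
Qed.


Lemma lZ (R : realType) (E : normedModType R) (l : {scalar E}) a u :
  l (a *: u) = a * l u.
Proof. exact: linearZ_LR. Qed.

Lemma L_cone (R : realType) (E : normedModType R) (C : set E) rho (L : {linear E -> E}) :
  proper_closed_cone C ->
  (forall phi, C phi -> phi != 0 -> cone_rho C rho (L phi) /\ L phi != 0) ->
  forall phi, C phi -> C (L phi).
Proof.
move=> hC H3 phi Cp; have [->|p0] := eqVneq phi 0.
  by rewrite linear0; case: hC.
by have [[]] := H3 _ Cp p0.
Qed.

Lemma lL_lower (R : realType) (E : normedModType R) (C : set E) (l : {scalar E})
  K rho vartheta (L : {linear E -> E}) phi :
  proper_closed_cone C -> 0 < rho -> 1 <= K ->
  (forall phi, C phi -> l phi >= K^-1 * `|phi|) -> opnorm l = 1 ->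
  0 < vartheta -> vartheta^-1 <= opnorm L ->
  (forall phi, C phi -> phi != 0 -> cone_rho C rho (L phi) /\ L phi != 0) ->
  cone_rho C rho phi -> l phi = 1 ->
  rho / (4 * K * vartheta) <= l (L phi).
Proof.
move=> hC r0 K1 H1 hl v0 hv H3 [Cp Bp] lp.
have K0 : 0 < K by lra.
have vi : 0 < vartheta^-1 by rewrite invr_gt0.
have [x [x1 hx]] := opnorm_gt vi hv.
set t := rho / 2.
have t0 : 0 < t by rewrite /t; lra.
have np : 1 <= `|phi| by rewrite -lp; apply: le_trans (l_le hl phi); exact: ler_norm.
have ntx : `|t *: x| < rho * `|phi|.
  rewrite normrZ gtr0_norm //.
  apply: (le_lt_trans (y := t)); first nra.
  rewrite /t; nra.
have C1 : C (phi + t *: x).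
  apply: Bp; rewrite -ball_normE /ball_ /=.
  by rewrite opprD addrA subrr sub0r normrN.
have C2 : C (phi - t *: x).
  apply: Bp; rewrite -ball_normE /ball_ /=.
  by rewrite opprB addrC subrK.
have CA := L_cone hC H3 C1.
have CB := L_cone hC H3 C2.
have hA := H1 _ CA.
have hB := H1 _ CB.
have eAB : l (L (phi + t *: x)) + l (L (phi - t *: x)) = l (L phi) + l (L phi).
  rewrite -(raddfD l) -(raddfD L) -(raddfD l) -(raddfD L).
  by rewrite addrACA subrr addr0.
have eD : L (phi + t *: x) - L (phi - t *: x) = (2 * t) *: L x.
  have lz : (2 * t) *: L x = L ((2 * t) *: x) by rewrite (linearZ_LR L).
  rewrite lz -(raddfB L); apply: congr1.
  rewrite opprB addrCA [X in _ + X]addrC addKr -scalerDl; congr (_ *: _); lra.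
have tri : `|L (phi + t *: x) - L (phi - t *: x)| <=
           `|L (phi + t *: x)| + `|L (phi - t *: x)| by apply: ler_normB.
rewrite eD normrZ gtr0_norm in tri; last lra.
have : (2 * t) * (vartheta^-1 / 2) <= `|L (phi + t *: x)| + `|L (phi - t *: x)|.
  apply: le_trans tri; apply: ler_wpM2l; first lra.
  exact: ltW.
move=> h2.
have : K^-1 * ((2 * t) * (vartheta^-1 / 2)) <= l (L phi) + l (L phi).
  rewrite -eAB; apply: le_trans (lerD hA hB); rewrite -mulrDr.
  by apply: ler_wpM2l => //; rewrite invr_ge0; lra.
have -> : K^-1 * ((2 * t) * (vartheta^-1 / 2)) = 2 * (rho / (4 * K * vartheta)).
  by rewrite /t; field; rewrite !gt_eqF.
lra.
Qed.

Definition Nrm (R : realType) (E : normedModType R) (l : {scalar E}) (L : E -> E) (phi : E) :=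
  (l (L phi))^-1 *: L phi.

Lemma Nrm_prop (R : realType) (E : normedModType R) (C : set E) (l : {scalar E})
  K rho (L : {linear E -> E}) phi :
  proper_closed_cone C -> 1 <= K ->
  (forall phi, C phi -> l phi >= K^-1 * `|phi|) ->
  (forall phi, C phi -> phi != 0 -> cone_rho C rho (L phi) /\ L phi != 0) ->
  C phi -> phi != 0 ->
  [/\ cone_rho C rho (Nrm l L phi), Nrm l L phi != 0, l (Nrm l L phi) = 1 &
      0 < l (L phi)].
Proof.
move=> hC K1 H1 H3 Cp p0.
have K0 : 0 < K by lra.
have [RL L0] := H3 _ Cp p0.
have CL : C (L phi) by case: RL.
have lL := lpos K0 H1 CL L0.
split => //.
- by apply: cone_rho_scale => //; rewrite invr_gt0.
- by rewrite /Nrm scaler_eq0 negb_or invr_eq0 gt_eqF.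
- by rewrite /Nrm lZ mulVf ?gt_eqF.
Qed.


Lemma cvm_comp d (Omega : measurableType d) (T U : Type) (g : Omega -> T) (F : T -> U) :
  countably_valued_measurable g -> countably_valued_measurable (F \o g).
Proof.
move=> [cg mg]; split.
  apply: sub_countable (sub_countable (card_image_le F (range g)) cg).
  apply: subset_card_le => _ [w _ <-]; by exists (g w) => //; exists w.
move=> x.
have [f finj] := countable_injP _ cg.
have -> : (F \o g) @^-1` [set x] = \bigcup_k [set w | f (g w) = k /\ F (g w) = x].
  apply/seteqP; split => w /=.
    by move=> hw; exists (f (g w)) => //.
  by move=> [k _ [_ ->]].
apply: bigcupT_measurable => k.
have [[y [[w0 _ <-] [fy Fy]]] | nex] :=
  pselect (exists y, range g y /\ f y = k /\ F y = x).
  have -> : [set w | f (g w) = k /\ F (g w) = x] = g @^-1` [set g w0].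
    apply/seteqP; split => w /=.
      move=> [fw _]; apply: finj; rewrite ?inE; [by exists w|by exists w0|].
      by rewrite fw fy.
    by move=> ->.
  exact: mg.
have -> : [set w | f (g w) = k /\ F (g w) = x] = set0.
  apply/seteqP; split => w0 //= [fw Fw]; apply: nex; exists (g w0).
  by split => //; exists w0.
exact: measurable0.
Qed.

Lemma cvm_const d (Omega : measurableType d) (T : Type) (c : T) :
  countably_valued_measurable (fun _ : Omega => c).
Proof.
split.
  apply: sub_countable (countable1 c).
  by apply: subset_card_le => _ [w _ <-].
move=> x; have [->|nx] := pselect (c = x).
  have -> : (fun _ : Omega => x) @^-1` [set x] = setT by apply/seteqP; split.
  exact: measurableT.
have -> : (fun _ : Omega => c) @^-1` [set x] = set0.
  by apply/seteqP; split => w //=.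
exact: measurable0.
Qed.


Lemma bochner_const d (Omega : measurableType d) (R : realType) (E : normedModType R) (c : E) :
  bochner_measurable (fun _ : Omega => c).
Proof.
exists (fun _ _ => c); split; first by move=> n; exact: cvm_const.
by move=> e e0; exists 0%N => n _ w; rewrite subrr normr0 ltW.
Qed.

Lemma inv_small (R : realType) (e : R) : 0 < e ->
  exists k : nat, forall n, (k <= n)%N -> n.+1%:R^-1 <= e.
Proof.
move=> e0; have [k hk] := ltr_add_invr e0; rewrite add0r in hk.
exists k => n kn; apply: le_trans (ltW hk).
by rewrite lef_pV2 ?posrE // ler_nat ltnS.
Qed.

Lemma bochner_unif d (Omega : measurableType d) (R : realType) (E : normedModType R)
  (x : nat -> Omega -> E) (f : Omega -> E) :
  (forall n, bochner_measurable (x n)) ->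
  (forall e : R, 0 < e -> exists N, forall n, (N <= n)%N -> forall w, `|x n w - f w| <= e) ->
  bochner_measurable f.
Proof.
move=> hx hu.
have : forall n, exists h : Omega -> E, countably_valued_measurable h /\
    forall w, `|h w - x n w| <= n.+1%:R^-1.
  move=> n; have [g [cg ug]] := hx n.
  have [N hN] := ug (n.+1%:R^-1) ltac:(by rewrite invr_gt0).
  by exists (g N); split => //; apply: hN.
move=> /choice [h hh].
exists h; split; first by move=> n; case: (hh n).
move=> e e0.
have e2 : 0 < e / 2 by lra.
have [k hk] := inv_small e2.
have [N hN] := hu _ e2.
exists (maxn k N) => n hn w.
have h1 := (hh n).2 w.
have h2 := hN n (leq_trans (leq_maxr _ _) hn) w.
have h3 := hk n (leq_trans (leq_maxl _ _) hn).
have -> : h n w - f w = (h n w - x n w) + (x n w - f w) by rewrite addrA subrK.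
apply: le_trans (ler_normD _ _) _; apply: le_trans (lerD h1 h2) _.
apply: le_trans (lerD h3 (lexx _)) _; lra.
Qed.

Lemma lip_norm (R : realType) (E : normedModType R) (l : {scalar E}) (z y : E) c0 M :
  opnorm l = 1 -> 0 < c0 -> 0 <= M -> `|z - y| <= c0 / 2 -> c0 <= l y -> `|y| <= M ->
  `|(l z)^-1 *: z - (l y)^-1 *: y| <= (2 * c0 + 2 * M) / c0 ^+ 2 * `|z - y|.
Proof.
move=> hl c0p M0 hzy ly hy.
set D := `|z - y| in hzy *.
have hD : `|l z - l y| <= D by rewrite -(raddfB l); exact: l_le.
have lz1 : c0 / 2 <= l z.
  have h : - D <= l z - l y by move: hD; rewrite ler_norml => /andP[].
  lra.
have lz0 : 0 < l z by lra.
have ly0 : 0 < l y by lra.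
have -> : (l z)^-1 *: z - (l y)^-1 *: y =
          (l z)^-1 *: (z - y) + ((l z)^-1 - (l y)^-1) *: y.
  by rewrite scalerBr scalerBl addrA subrK.
apply: le_trans (ler_normD _ _) _.
rewrite !normrZ.
have -> : (l z)^-1 - (l y)^-1 = (l y - l z) / (l z * l y).
  by field; rewrite !gt_eqF.
rewrite -/D !normrM !normfV (gtr0_norm lz0) (gtr0_norm (mulr_gt0 lz0 ly0)).
have hD' : `|l y - l z| <= D by rewrite distrC.
have i1 : (l z)^-1 <= 2 / c0.
  rewrite -(invf_div c0 2) lef_pV2 ?posrE //; lra.
have i2 : (l z * l y)^-1 <= 2 / c0 ^+ 2.
  rewrite -(invf_div (c0 ^+ 2) 2) lef_pV2 ?posrE ?mulr_gt0 //; try lra.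
  rewrite expr2; nra.
have D0 : 0 <= D by exact: normr_ge0.
have a1 : (l z)^-1 * D <= 2 / c0 * D by apply: ler_wpM2r.
have a2 : `|l y - l z| / (l z * l y) * `|y| <= D * (2 / c0 ^+ 2) * M.
  apply: ler_pM => //; first by apply: mulr_ge0; rewrite ?invr_ge0 ?mulr_ge0 //; lra.
  by apply: ler_pM => //; rewrite invr_ge0 mulr_ge0 //; lra.
have -> : (2 * c0 + 2 * M) / c0 ^+ 2 * D = 2 / c0 * D + D * (2 / c0 ^+ 2) * M.
  by field; rewrite gt_eqF.
exact: lerD.
Qed.


Lemma Linfty_normalize d (Omega : measurableType d) (R : realType) (E : normedModType R)
  (l : {scalar E}) (g : Omega -> E) c0 :
  opnorm l = 1 -> 0 < c0 -> Linfty_section g -> (forall w, c0 <= l (g w)) ->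
  Linfty_section (fun w => (l (g w))^-1 *: g w).
Proof.
move=> hl c0p [[a [ca ua]] [M hM]] hg.
have M0 : forall w, `|g w| <= `|M| by move=> w; apply: le_trans (hM w) (ler_norm _).
split.
  exists (fun n w => (l (a n w))^-1 *: a n w); split.
    move=> n; exact: (cvm_comp (fun z => (l z)^-1 *: z) (ca n)).
  move=> e e0.
  set Q := (2 * c0 + 2 * `|M|) / c0 ^+ 2.
  have Q0 : 0 < Q.
    rewrite /Q divr_gt0 ?exprn_gt0 //; have := normr_ge0 M; lra.
  have [N1 hN1] := ua (c0 / 2) ltac:(lra).
  have [N2 hN2] := ua (e / Q) ltac:(by apply: divr_gt0).
  exists (maxn N1 N2) => n hn w.
  have h1 := hN1 n (leq_trans (leq_maxl _ _) hn) w.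
  have h2 := hN2 n (leq_trans (leq_maxr _ _) hn) w.
  apply: le_trans (lip_norm hl c0p (normr_ge0 M) h1 (hg w) (M0 w)) _.
  apply: le_trans (ler_wpM2l (ltW Q0) h2) _.
  by rewrite mulrC divfK ?gt_eqF.
exists (c0^-1 * `|M|) => w.
have lg : 0 < l (g w) by apply: lt_le_trans (hg w).
rewrite normrZ normfV gtr0_norm //.
apply: ler_pM => //; first by rewrite invr_ge0 ltW.
by rewrite lef_pV2 ?posrE.
Qed.


Lemma geo_small (R : realType) (lam e : R) : 0 <= lam -> lam < 1 -> 0 < e ->
  exists N, forall n, (N <= n)%N -> lam ^+ n <= e.
Proof.
move=> l0 l1 e0.
have hc : `|lam| < 1 by rewrite ger0_norm.
have := cvg_expr hc => /cvgrPdist_le /(_ e e0) [N _ hN].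
exists N => n hn; have := hN n hn; rewrite /= sub0r normrN ger0_norm //.
exact: exprn_ge0.
Qed.

Lemma seq_limit (R : realType) (E : completeNormedModType R) (u : nat -> E) (B : nat -> R) :
  (forall n k, `|u n - u (n + k)%N| <= B n) ->
  (forall e, 0 < e -> exists N, forall n, (N <= n)%N -> B n <= e) ->
  exists l, (u @ \oo --> l) /\ forall n, `|u n - l| <= B n.
Proof.
move=> hu hB.
have hc : cvg (u @ \oo).
  apply: cauchy_cvg; apply: cauchy_exP => e e0.
  have [N hN] := hB (e / 2) ltac:(lra).
  exists (u N); exists N => // n /= hn.
  rewrite -ball_normE /ball_ /= -(subnKC hn).
  apply: le_lt_trans (hu _ _) _; apply: le_lt_trans (hN N (leqnn _)) _; lra.
exists (lim (u @ \oo)); split => // n.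
apply/ler_addgt0Pr => e e0.
have := hc => /cvgrPdist_lt /(_ e e0) [M _ hM].
set m := maxn n M.
have h1 := hM m (leq_maxr _ _).
have h2 : `|u n - u m| <= B n by rewrite /m -(subnKC (leq_maxl n M)); exact: hu.
have -> : u n - lim (u @ \oo) = (u n - u m) + (u m - lim (u @ \oo)) by rewrite addrA subrK.
apply: le_trans (ler_normD _ _) _; apply: lerD => //.
by rewrite distrC ltW.
Qed.

Lemma opnorm_le (R : realType) (E : normedModType R) (L : {linear E -> E}) x :
  0 < opnorm L -> `|L x| <= opnorm L * `|x|.
Proof.
move=> H.
have hs : has_sup [set `|L x| | x in [set x : E | `|x| <= 1]].
  by apply: opnorm_has_sup; rewrite gt_eqF.
have [->|x0] := eqVneq x 0; first by rewrite linear0 !normr0 mulr0.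
have nx : 0 < `|x| by rewrite normr_gt0.
have : `|L (`|x|^-1 *: x)| <= opnorm L.
  apply: sup_upper_bound => //; exists (`|x|^-1 *: x) => //=.
  by rewrite normrZ normfV normr_id mulVf // gt_eqF.
have -> : L (`|x|^-1 *: x) = `|x|^-1 *: L x := linearZ_LR L _ x.
rewrite normrZ normfV normr_id ler_pdivrMl //.
by rewrite mulrC.
Qed.

Lemma eq_small (R : realType) (E : normedModType R) (x y : E) :
  (forall e : R, 0 < e -> `|x - y| <= e) -> x = y.
Proof.
move=> h; apply/eqP; rewrite -subr_eq0 -normr_le0.
by apply/ler_addgt0Pr => e e0; rewrite add0r; exact: h.
Qed.


Fixpoint xs (R : realType) (E : normedModType R) (Omega : Type) (l : {scalar E})
  (Lw : Omega -> {linear E -> E}) (taui : Omega -> Omega) (phi0 : E) (n : nat) : Omega -> E :=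
  if n is n'.+1 then fun w => Nrm l (Lw (taui w)) (xs l Lw taui phi0 n' (taui w))
  else fun _ => phi0.

Unset Implicit Arguments.

Theorem lemma2p1 (R : realType) (E : completeNormedModType R)
  (C : set E) (l : {scalar E}) (K rho vartheta : R)
  (M : set {linear E -> E})
  (d : measure_display) (Omega : measurableType d) (P : probability Omega R)
  (tau taui : Omega -> Omega) (Lw : Omega -> {linear E -> E}) :
  proper_closed_cone C ->
  (* (H1) *)
  continuous l -> opnorm l = 1 -> 1 <= K ->
  (forall phi, C phi -> l phi >= K^-1 * `|phi|) ->
  (* (H2) *)
  0 < rho -> rho <= 1 -> (exists phi, cone_rho C rho phi /\ phi != 0) ->
  (* the collection M *)
  1 <= vartheta ->
  (forall L : {linear E -> E}, M L ->
     [/\ continuous L,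
         (* (H3) *)
         (forall phi, C phi -> phi != 0 -> cone_rho C rho (L phi) /\ L phi != 0) &
         (* (H4) *)
         vartheta^-1 <= opnorm L /\ opnorm L <= vartheta]) ->
  (* the random dynamical system *)
  invertible_mp P tau taui -> ergodic P tau ->
  (forall w, M (Lw w)) ->
  (* L : X -> X is well defined *)
  (forall phi : Omega -> E, Linfty_section phi ->
     Linfty_section (fun w => Lw (taui w) (phi (taui w)))) ->
  exists f : Omega -> E,
    let fixpt (g : Omega -> E) :=
      [/\ Linfty_section g,
          (forall w, cone_rho_l1 C rho l (g w)) &
          (forall w, g w = (l (Lw (taui w) (g (taui w))))^-1 *:
                             Lw (taui w) (g (taui w)))] in
    fixpt f /\ forall g, fixpt g -> g = f.
Proof.
move=> hC lc hl K1 H1 r0 r1 [p0 [Rp0 p0n]] v1 HM hmp erg HLw HX.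
have K0 : 0 < K by lra.
have v0 : 0 < vartheta by lra.
have Cp0 : C p0 by case: Rp0.
have lp0 := lpos K0 H1 Cp0 p0n.
set phi0 := (l p0)^-1 *: p0.
have Rphi0 : cone_rho C rho phi0 by apply: cone_rho_scale => //; rewrite invr_gt0.
have phi0n : phi0 != 0 by rewrite /phi0 scaler_eq0 negb_or invr_eq0 !gt_eqF.
have lphi0 : l phi0 = 1 by rewrite /phi0 lZ mulVf ?gt_eqF.
have HMw : forall w, [/\ (forall phi, C phi -> phi != 0 ->
      cone_rho C rho (Lw w phi) /\ Lw w phi != 0),
    vartheta^-1 <= opnorm (Lw w) & opnorm (Lw w) <= vartheta].
  by move=> w; have [_ h3 [h4 h5]] := HM _ (HLw w); split.
set c := rho / (2 * K).
have c0 : 0 < c by rewrite /c divr_gt0 // mulr_gt0.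
have c1 : c <= 1 / 2 by rewrite /c ler_pdivrMr ?mulr_gt0 //; nra.
set lam := 1 - c ^+ 2.
have lam0 : 0 <= lam by rewrite /lam; nra.
have lam1 : lam < 1 by rewrite /lam; nra.
set x := xs l Lw taui phi0.
have xS : forall n w, x n.+1 w = Nrm l (Lw (taui w)) (x n (taui w)) by [].
have inv : forall n w, [/\ cone_rho C rho (x n w), x n w != 0 & l (x n w) = 1].
  elim => [|n IH] w; first by split.
  have [R1 n1 l1] := IH (taui w).
  have [h3 _ _] := HMw (taui w).
  have [a1 a2 a3 _] := Nrm_prop hC K1 H1 h3 (proj1 R1) n1.
  by rewrite xS; split.
have Cx : forall n w, C (x n w) by move=> n w; have [[]] := inv n w.
have gd : forall n k w, good C (x n w) (x (n + k)%N w) (lam ^+ n).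
  elim => [|n IH] k w.
    rewrite expr0 add0n.
    have [R1 n1 _] := inv 0%N w; have [R2 n2 _] := inv k w.
    exact: good_init hC r0 r1 K1 H1 hl R1 n1 R2 n2.
  rewrite addSn !xS.
  have [h3 _ _] := HMw (taui w).
  have g1 := good_step hC r0 r1 K1 H1 hl h3 (IH k (taui w)).
  have [_ n1 _] := inv n (taui w).
  have [_ n2 _] := inv (n + k)%N (taui w).
  have [_ _ _ q1] := Nrm_prop hC K1 H1 h3 (Cx n (taui w)) n1.
  have [_ _ _ q2] := Nrm_prop hC K1 H1 h3 (Cx (n + k)%N (taui w)) n2.
  rewrite exprS /Nrm.
  by apply: good_scale g1 => //; rewrite invr_gt0.
have dist : forall n k w, `|x n w - x (n + k)%N w| <= 2 * K * lam ^+ n.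
  move=> n k w; have [_ _ l1] := inv n w; have [_ _ l2] := inv (n + k)%N w.
  exact: good_norm hC K0 H1 (gd n k w) (Cx n w) l1 l2.
have Bsmall : forall e, 0 < e -> exists N, forall n, (N <= n)%N -> 2 * K * lam ^+ n <= e.
  move=> e e0.
  have e1 : 0 < e / (2 * K) by rewrite divr_gt0 // mulr_gt0.
  have [N hN] := geo_small lam0 lam1 e1.
  exists N => n hn; have := hN n hn.
  have K2 : 0 < 2 * K by lra.
  by rewrite -(ler_pM2l K2) [X in _ <= X]mulrC divfK ?gt_eqF // mulrA.
have lims : forall w, exists l0, (x ^~ w @ \oo --> l0) /\
    forall n, `|x n w - l0| <= 2 * K * lam ^+ n.
  move=> w; apply: (seq_limit (u := fun n => x n w)); last exact: Bsmall.
  by move=> n k; exact: dist.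
have [f hf] := choice lims.
exists f => /=.
have Cf : forall w, C (f w).
  move=> w; have [cl _ _ _ _] := hC.
  apply: (closed_cvg C cl _ _ (hf w).1).
  by exists 0%N => // n _; exact: Cx.
have lf : forall w, l (f w) = 1.
  move=> w; apply/eqP; rewrite -subr_eq0 -normr_le0.
  apply/ler_addgt0Pr => e e0; rewrite add0r.
  have [N hN] := Bsmall e e0.
  have [_ _ l1] := inv N w.
  rewrite -{1}l1 -(raddfB l).
  apply: le_trans (l_le hl _) _; rewrite distrC.
  apply: le_trans ((hf w).2 N) _; exact: hN.
have fn : forall w, f w != 0.
  move=> w; apply/eqP => h; have := lf w; rewrite h raddf0 => /eqP.
  by rewrite eq_sym oner_eq0.
set c0' := rho / (4 * K * vartheta).
have c0p : 0 < c0' by rewrite /c0' divr_gt0 // !mulr_gt0.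
have lowb : forall n w, c0' <= l (Lw (taui w) (x n (taui w))).
  move=> n w; have [h3 hv1 _] := HMw (taui w); have [R1 _ l1] := inv n (taui w).
  exact: lL_lower hC r0 K1 H1 hl v0 hv1 h3 R1 l1.
have nx : forall n w, `|x n w| <= K.
  by move=> n w; have := normK K0 H1 (Cx n w); have [_ _ ->] := inv n w; rewrite mulr1.
have ffix : forall w, f w = Nrm l (Lw (taui w)) (f (taui w)).
  move=> w; set w' := taui w.
  have [h3 hv1 hv2] := HMw w'.
  have opL : 0 < opnorm (Lw w') by apply: lt_le_trans hv1; rewrite invr_gt0.
  set Q := (2 * c0' + 2 * (vartheta * K)) / c0' ^+ 2.
  have Q0 : 0 < Q by rewrite /Q divr_gt0 ?exprn_gt0 //; nra.
  apply: eq_small => e e0.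
  set t := e / (1 + Q * vartheta).
  have t0 : 0 < t by rewrite /t divr_gt0 //; nra.
  have [N1 hN1] := Bsmall t t0.
  have [N2 hN2] := Bsmall (c0' / (2 * vartheta)) ltac:(by rewrite divr_gt0 //; lra).
  set n := maxn N1 N2.
  have b1 : 2 * K * lam ^+ n <= t := hN1 n (leq_maxl _ _).
  have b1' : 2 * K * lam ^+ n.+1 <= t := hN1 n.+1 (leq_trans (leq_maxl _ _) (leqnSn _)).
  have b2 : 2 * K * lam ^+ n <= c0' / (2 * vartheta) := hN2 n (leq_maxr _ _).
  set b := 2 * K * lam ^+ n in b1 b2.
  have d1 : `|f w - x n.+1 w| <= t by rewrite distrC; apply: le_trans ((hf w).2 n.+1) b1'.
  have d2 : `|f w' - x n w'| <= b by rewrite distrC; exact: (hf w').2 n.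
  have d3 : `|Lw w' (f w') - Lw w' (x n w')| <= vartheta * b.
    rewrite -(raddfB (Lw w')); apply: le_trans (opnorm_le _ opL) _.
    by apply: ler_pM => //; exact: ltW.
  have d3' : `|Lw w' (f w') - Lw w' (x n w')| <= c0' / 2.
    apply: le_trans d3 _.
    have -> : c0' / 2 = vartheta * (c0' / (2 * vartheta)) by field; rewrite gt_eqF.
    by apply: ler_wpM2l => //; exact: ltW.
  have ny : `|Lw w' (x n w')| <= vartheta * K.
    apply: le_trans (opnorm_le _ opL) _; apply: ler_pM => //; exact: ltW.
  have MK : 0 <= vartheta * K by rewrite mulr_ge0 // ltW.
  have d4 := lip_norm hl c0p MK d3' (lowb n w) ny.
  rewrite -/Q in d4.
  have d5 : `|Nrm l (Lw w') (f w') - x n.+1 w| <= Q * (vartheta * b).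
    apply: le_trans d4 _; apply: ler_wpM2l; first exact: ltW.
    exact: d3.
  have -> : f w - Nrm l (Lw w') (f w') = (f w - x n.+1 w) + (x n.+1 w - Nrm l (Lw w') (f w')).
    by rewrite addrA subrK.
  apply: le_trans (ler_normD _ _) _.
  rewrite [X in _ + X <= _]distrC.
  have d6 : Q * (vartheta * b) <= Q * vartheta * t.
    by rewrite mulrA; apply: ler_wpM2l => //; apply: mulr_ge0; exact: ltW.
  have -> : e = t + Q * vartheta * t by rewrite /t; field; apply/lt0r_neq0; nra.
  apply: lerD => //; exact: le_trans d5 d6.
have fR : forall w, cone_rho C rho (f w).
  move=> w; rewrite ffix; have [h3 _ _] := HMw (taui w).
  by have [] := Nrm_prop hC K1 H1 h3 (Cf (taui w)) (fn (taui w)).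
have xL : forall n, Linfty_section (x n).
  elim => [|n IH].
    split; first exact: bochner_const.
    by exists `|phi0| => w.
  exact: (Linfty_normalize hl c0p (HX _ IH) (lowb n)).
split.
  split.
  - split.
      apply: (bochner_unif (x := x)); first by move=> n; case: (xL n).
      move=> e e0; have [N hN] := Bsmall e e0.
      by exists N => n hn w; apply: le_trans ((hf w).2 n) _; exact: hN.
    exists K => w; have := normK K0 H1 (Cf w); rewrite lf mulr1 //.
  - by move=> w; split; [exact: fR | exact: lf].
  - by move=> w; exact: ffix w.
move=> g [_ hg1 hg2].
have gfix : forall w, g w = Nrm l (Lw (taui w)) (g (taui w)) by move=> w; exact: hg2.
have gn : forall w, g w != 0.
  move=> w; apply/eqP => h; have [_] := hg1 w; rewrite h raddf0 => /eqP.
  by rewrite eq_sym oner_eq0.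
have Cg : forall w, C (g w) by move=> w; have [[]] := hg1 w.
have gd2 : forall n w, good C (f w) (g w) (lam ^+ n).
  elim => [|n IH] w.
    rewrite expr0; have [Rg _] := hg1 w.
    exact: good_init hC r0 r1 K1 H1 hl (fR w) (fn w) Rg (gn w).
  rewrite ffix gfix.
  have [h3 _ _] := HMw (taui w).
  have g1 := good_step hC r0 r1 K1 H1 hl h3 (IH (taui w)).
  have [_ _ _ q1] := Nrm_prop hC K1 H1 h3 (Cf (taui w)) (fn (taui w)).
  have [_ _ _ q2] := Nrm_prop hC K1 H1 h3 (Cg (taui w)) (gn (taui w)).
  rewrite exprS /Nrm.
  by apply: good_scale g1 => //; rewrite invr_gt0.
apply: funext => w; apply: eq_small => e e0.
have [N hN] := Bsmall e e0.
have [_ lg] := hg1 w.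
rewrite distrC; apply: le_trans (hN N (leqnn _)).
exact: good_norm hC K0 H1 (gd2 N w) (Cf w) (lf w) lg.
Qed.
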